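(* For $n\ge 0$ let $K_n$ be the complete graph on $n$ vertices ($K_0$ empty). Then $$\sum_{n\ge 0}\mathrm{sa}(K_n;t)\,\frac{x^n}{n!} = e^{tx}\,\operatorname{sech} x.$$
   Context: All graphs are finite, simple and undirected. For a graph $G=(V,E)$ and $V'\subseteq V$, $G|_{V'}$ denotes the induced subgraph on $V'$. The signed a-number $\mathrm{sa}(G)$ is defined recursively: $\mathrm{sa}(G)=1$ if $G$ is the empty graph (no vertices); $\mathrm{sa}(G)=0$ if $G$ has a connected component with an odd number of vertices; otherwise $\mathrm{sa}(G)=-\sum_{V'\subsetneq V}\mathrm{sa}(G|_{V'})$. The signed a-polynomial of $G$ is $\mathrm{sa}(G;t)=\sum_{V'\subseteq V}\mathrm{sa}(G|_{V'})\,t^{|V\setminus V'|}$. *)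

(* Defs.v *)
From HB Require Import structures.
From mathcomp Require Import all_boot all_order all_algebra.
From mathcomp Require Import all_classical all_reals all_analysis.
Set Implicit Arguments. Unset Strict Implicit. Unset Printing Implicit Defensive.
Import Order.TTheory GRing.Theory Num.Theory.
Local Open Scope ring_scope.

(* A finite simple graph is given by a vertex set V : {set T} inside a finType T
   and an adjacency relation e : rel T (assumed symmetric and irreflexive where
   needed).  The induced subgraph G|_{V'} is (V', e) for V' \subset V. *)

Definition restr_rel (T : finType) (e : rel T) (V : {set T}) : rel T :=
  [rel x y | [&& x \in V, y \in V & e x y]].

Definition component (T : finType) (e : rel T) (V : {set T}) (x : T) : {set T} :=
  [set y in V | connect (restr_rel e V) x y].

Definition has_odd_component (T : finType) (e : rel T) (V : {set T}) : bool :=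
  [exists x in V, odd #|component e V x|].

(* signed a-number, by recursion with fuel (fuel = #|V| suffices, since proper
   subsets have strictly smaller cardinality) *)
Fixpoint sa_rec (T : finType) (e : rel T) (k : nat) (V : {set T}) : int :=
  match k with
  | 0 => 1
  | k'.+1 =>
      if V == finset.set0 then 1
      else if has_odd_component e V then 0
      else - \sum_(W : {set T} | W \proper V) sa_rec e k' W
  end.

Definition sa (T : finType) (e : rel T) (V : {set T}) : int := sa_rec e #|V| V.

Definition sa_poly_eval (R : comNzRingType) (T : finType) (e : rel T) (V : {set T}) (t : R) : R :=
  \sum_(W : {set T} | W \subset V) (sa e W)%:~R * t ^+ #|V :\: W|.

Definition Kn_rel (n : nat) : rel 'I_n := fun i j => i != j.
Arguments Kn_rel : clear implicits.

Definition sech (R : realType) (x : R) : R := 2 / (expR x + expR (- x)).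

(* Main.v *)
Require Import Defs.
From HB Require Import structures.
From mathcomp Require Import all_boot all_order all_algebra.
From mathcomp Require Import all_classical all_reals all_analysis.
From mathcomp Require Import ring lra.
Import Order.TTheory GRing.Theory Num.Theory.
Import numFieldNormedType.Exports.
Set Implicit Arguments. Unset Strict Implicit. Unset Printing Implicit Defensive.
Local Open Scope ring_scope.

Section Polys.
Variable R : comNzRingType.

Definition stp (e : R) (f : {poly R}) : {poly R} :=
  (1 + e *: 'X^2) * f^`() + e *: ('X * f).
Fixpoint rp n : {poly R} := if n is m.+1 then stp (-1) (rp m) else 1.
Fixpoint pp n : {poly R} := if n is m.+1 then stp 1 (pp m) else 1.
Definition gp m : {poly R} := if odd m then 'X else 1.
Definition Dp (f : {poly R}) : {poly R} := (1 - 'X^2) * f^`().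

Lemma coef_stp e f k :
  (stp e f)`_k = f`_k.+1 *+ k.+1 + e * (f`_k.-1 *+ k).
Proof.
rewrite /stp mulrDl mul1r -scalerAl !coefD !coefZ coef_deriv coefXM coefXnM.
case: k => [|[|k]] /=; rewrite ?mulr0 ?addr0 ?mulr1n //.
rewrite !coef_deriv subn2 /=.
by rewrite -addrA -mulrDr (mulrSr _ k.+1).
Qed.

Lemma rpS n : rp n.+1 = Dp (rp n) - 'X * rp n.
Proof. by rewrite /= /stp /Dp !scaleN1r. Qed.

Lemma DpM f g : Dp (f * g) = Dp f * g + f * Dp g.
Proof. rewrite /Dp derivM; ring. Qed.

Lemma Dp_g m : Dp (gp m) = gp m.+1 - 'X * gp m.
Proof.
rewrite /Dp /gp /=; case: (odd m) => /=.
  rewrite derivX mulr1; ring.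
by rewrite derivC mulr0 mulr1 subrr.
Qed.

Lemma Dp_gr m j : Dp (gp m * rp j) = gp m.+1 * rp j + gp m * rp j.+1.
Proof. rewrite DpM Dp_g rpS; ring. Qed.

Lemma DpD f g : Dp (f + g) = Dp f + Dp g.
Proof. by rewrite /Dp derivD mulrDr. Qed.
Lemma Dp0 : Dp 0 = 0.
Proof. by rewrite /Dp deriv0 mulr0. Qed.
Lemma DpMn f k : Dp (f *+ k) = Dp f *+ k.
Proof. by rewrite /Dp derivMn mulrnAr. Qed.
Lemma Dp_sum I (r : seq I) (P : pred I) (F : I -> {poly R}) :
  Dp (\sum_(i <- r | P i) F i) = \sum_(i <- r | P i) Dp (F i).
Proof. exact: (big_morph _ DpD Dp0). Qed.

Lemma pascal (V : zmodType) (h : nat -> nat -> V) n :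
  \sum_(j < n.+2) h (n.+1 - j)%N j *+ 'C(n.+1, j) =
  \sum_(j < n.+1) (h (n.+1 - j)%N j + h (n - j)%N j.+1) *+ 'C(n, j).
Proof.
under [RHS]eq_bigr do rewrite mulrnDl.
rewrite big_ord_recl /= big_split /=.
rewrite [in RHS]big_ord_recl /= subn0 bin0 !mulr1n -!addrA; congr (_ + _); first by rewrite bin0.
under eq_bigr do rewrite /bump /= add1n subSS binS mulrnDr.
rewrite big_split /=; congr (_ + _).
rewrite big_ord_recr /= (@bin_small n n.+1) // mulr0n addr0.
by apply: eq_bigr => i _; rewrite /bump /= add1n subSS.
Qed.

Definition Mp n : {poly R} := \sum_(j < n.+1) (gp (n - j) * rp j) *+ 'C(n, j).

Lemma MpS n : Mp n.+1 = Dp (Mp n).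
Proof.
rewrite /Mp (pascal (fun a b => gp a * rp b)) Dp_sum; apply: eq_bigr => j _.
rewrite DpMn Dp_gr; congr (_ *+ _).
by rewrite subSn // -ltnS.
Qed.

Lemma Mp_eq0 n : Mp n.+1 = 0.
Proof.
elim: n => [|n IH]; last by rewrite MpS IH Dp0.
rewrite MpS /Mp big_ord1 /= mulr1 mulr1n /Dp derivC mulr0 //.
Qed.

Definition alpha n : R := (rp n).[0].

Lemma alpha0 : alpha 0 = 1.
Proof. by rewrite /alpha /= hornerC. Qed.

Lemma alpha_rec n : (0 < n)%N ->
  \sum_(j < n.+1) (if odd (n - j) then 0 else alpha j) *+ 'C(n, j) = 0.
Proof.
case: n => // n _; have H := congr1 (horner^~ 0) (Mp_eq0 n).
rewrite /Mp horner_sum horner0 in H; rewrite -[X in _ = X]H.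
apply: eq_bigr => j _.
rewrite hornerMn hornerM /gp /alpha; case: odd; last by rewrite hornerC mul1r.
by rewrite hornerX mul0r.
Qed.

Lemma alpha_odd n : odd n -> alpha n = 0.
Proof.
elim/ltn_ind: n => n IH on.
have n0 : (0 < n)%N by case: n on {IH}.
have := alpha_rec n0; rewrite big_ord_recr /= subnn /= binn mulr1n.
rewrite big1 ?add0r // => j _.
case: ifP => [_|]; first by rewrite mul0rn.
rewrite oddB; last by apply: ltnW.
rewrite on /= => /negbFE oj; by rewrite IH // mul0rn.
Qed.

Lemma alpha_even n : (0 < n)%N -> ~~ odd n ->
  \sum_(j < n.+1) alpha j *+ 'C(n, j) = 0.
Proof.
move=> n0 en; rewrite -[X in _ = X](alpha_rec n0); apply: eq_bigr => j _.
case: ifP => // oj; rewrite alpha_odd //.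
move: oj; rewrite oddB; last by rewrite -ltnS.
by rewrite (negbTE en).
Qed.

End Polys.

Section Bound.
Variable R : numDomainType.

Lemma rp_pp_coef n k : `|(rp R n)`_k| <= (pp R n)`_k.
Proof.
elim: n k => [|n IH] k /=.
  by rewrite coef1; case: (k == 0%N); rewrite ?normr1 ?normr0.
rewrite !coef_stp mulN1r mul1r.
apply: le_trans (ler_normB _ _) _; rewrite !normrMn.
apply: lerD; exact: ler_wMn2r.
Qed.

Lemma pp_coef_ge0 n k : 0 <= (pp R n)`_k.
Proof. exact: le_trans (normr_ge0 _) (rp_pp_coef n k). Qed.

Lemma alpha_le n : `|alpha R n| <= (pp R n).[0].
Proof. by rewrite /alpha !horner_coef0 rp_pp_coef. Qed.

Lemma pp_horner_ge0 n (y : R) : 0 <= y -> 0 <= (pp R n).[y].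
Proof.
move=> y0; rewrite horner_coef; apply: sumr_ge0 => i _.
by rewrite mulr_ge0 ?exprn_ge0 ?pp_coef_ge0.
Qed.
End Bound.

Section Comb.

Lemma sa_rec_fuel (T : finType) (e : rel T) k (W : {set T}) :
  (#|W| <= k)%N -> sa_rec e k.+1 W = sa_rec e k W.
Proof.
elim: k W => [|k IH] W hW.
  by move: hW; rewrite leqn0 cards_eq0 => /eqP ->; rewrite /= eqxx.
rewrite [LHS]/= [RHS]/=; case: ifP => // _; case: ifP => // _.
congr (- _); apply: eq_bigr => W' pW'.
by apply: IH; rewrite -ltnS (leq_trans (proper_card pW') hW).
Qed.

Lemma sa_fuel (T : finType) (e : rel T) k (W : {set T}) :
  (#|W| <= k)%N -> sa_rec e k W = sa e W.
Proof.
elim: k => [|k IH] hW.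
  by rewrite /sa; move: hW; rewrite leqn0 => /eqP ->.
case: (ltngtP #|W| k.+1) hW => // [lt|eq] _.
  by rewrite sa_rec_fuel // -IH.
by rewrite /sa eq.
Qed.

Lemma component_Kn n (W : {set 'I_n}) x : x \in W ->
  component (Kn_rel n) W x = W.
Proof.
move=> xW; apply/setP => y; rewrite inE; case yW: (y \in W) => //=.
case: (eqVneq x y) => [->|nxy]; first exact: connect0.
by apply: connect1; rewrite /restr_rel /= xW yW /Kn_rel nxy.
Qed.

Lemma hoc_Kn n (W : {set 'I_n}) : W != finset.set0 ->
  has_odd_component (Kn_rel n) W = odd #|W|.
Proof.
move=> /set0Pn [x xW]; apply/existsP/idP => [[y /andP[yW]]|o].
  by rewrite component_Kn.
by exists x; rewrite xW component_Kn.
Qed.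

Lemma sum_subsets (T : finType) (V : nmodType) (f : nat -> V) (W : {set T}) :
  \sum_(W' : {set T} | W' \subset W) f #|W'| =
  \sum_(k < #|W|.+1) f k *+ 'C(#|W|, k).
Proof.
rewrite (partition_big (fun W' : {set T} => inord #|W'| : 'I_(#|W|.+1)) xpredT) //.
apply: eq_bigr => k _.
rewrite -cards_draws -sumr_const; apply: eq_big => [W'|W' /andP[sW /eqP <-]].
  rewrite !inE; apply: andb_id2l => sW.
  rewrite -(inj_eq val_inj) /= inordK // ltnS; exact: subset_leq_card.
by rewrite inordK // ltnS; exact: subset_leq_card.
Qed.

End Comb.

Section SaKn.
Variable R : comNzRingType.

Lemma sa_Kn n (W : {set 'I_n}) : (sa (Kn_rel n) W)%:~R = alpha R #|W|.
Proof.
have [m] := ubnP #|W|; elim: m W => // m IH W hm.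
have [->|W0] := eqVneq W finset.set0.
  by rewrite /sa cards0 /= alpha0.
have cW : (0 < #|W|)%N by rewrite card_gt0.
rewrite /sa -(prednK cW) /= (negbTE W0) hoc_Kn //.
rewrite (prednK cW); case: ifP => oW; first by rewrite alpha_odd.
rewrite rmorphN rmorph_sum /=.
rewrite (eq_bigr (fun W' : {set 'I_n} => alpha R #|W'|)); last first.
  move=> W' pW'; rewrite sa_fuel; last by rewrite -ltnS (prednK cW) proper_card.
  by apply: IH; apply: leq_trans (proper_card pW') _; rewrite -ltnS.
have := alpha_even R cW (negbT oW); rewrite -sum_subsets (bigD1 W) //=.
move/eqP; rewrite addr_eq0 => /eqP ->; congr (- _).
by apply: eq_bigl => W'; rewrite finset.properEneq andbC.
Qed.

Lemma sa_poly_Kn n (t : R) :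
  sa_poly_eval (Kn_rel n) finset.setT t = \sum_(k < n.+1) (alpha R k * t ^+ (n - k)) *+ 'C(n, k).
Proof.
rewrite /sa_poly_eval.
rewrite (eq_bigr (fun W : {set 'I_n} => alpha R #|W| * t ^+ (n - #|W|))); last first.
  move=> W _; rewrite sa_Kn finset.setTD; congr (_ * _ ^+ _).
  by rewrite cardsCs finset.setCK card_ord.
by rewrite (sum_subsets (fun k => alpha R k * t ^+ (n - k))) cardsT card_ord.
Qed.
End SaKn.

Section Taylor.
Variable R : realType.

Definition tpoly (F : nat -> R -> R) N : {poly R} :=
  \poly_(k < N) (F k 0 / k`!%:R).

Lemma tpoly_deriv F N : (tpoly F N.+1)^`() = tpoly (fun k => F k.+1) N.
Proof.
apply/polyP => k; rewrite coef_deriv !coef_poly.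
rewrite ltnS; case: ltnP => hk //=; last by rewrite mul0rn.
rewrite factS natrM invfM -mulr_natr.
have h1 : (k.+1%:R : R) != 0 by rewrite pnatr_eq0.
have h2 : (k`!%:R : R) != 0 by rewrite pnatr_eq0 -lt0n fact_gt0.
field; by rewrite h2 addrC natr1 h1.
Qed.

Lemma tpoly_horner F N y :
  (tpoly F N).[y] = \sum_(k < N) F k 0 * y ^+ k / k`!%:R.
Proof.
rewrite horner_poly; apply: eq_bigr => k _; by rewrite mulrAC.
Qed.

Lemma taylor_lb (b : R) (F : nat -> R -> R) :
  (forall k x, 0 <= x < b -> is_derive x 1 (F k) (F k.+1 x)) ->
  (forall k x, 0 <= x < b -> 0 <= F k x) ->
  forall N y, 0 <= y < b -> \sum_(k < N) F k 0 * y ^+ k / k`!%:R <= F 0 y.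
Proof.
move=> dF pF N; elim: N F dF pF => [|N IH] F dF pF y /andP[y0 yb].
  by rewrite big_ord0 pF // y0.
rewrite -tpoly_horner -subr_ge0.
pose D := F 0 - horner (tpoly F N.+1).
have dD : forall z, 0 <= z < b ->
  is_derive z 1 D (F 1 z - (tpoly (fun k => F k.+1) N).[z]).
  move=> z hz; rewrite -tpoly_deriv; apply: is_deriveB; first exact: dF.
have D0 : D 0 = 0.
  change (F 0 0 - (tpoly F N.+1).[0] = 0).
  rewrite tpoly_horner big_ord_recl big1 ?addr0.
    by rewrite expr0 mulr1 fact0 divr1 subrr.
  by move=> i _; rewrite expr0n /= mulr0 mul0r.
have -> : F 0 y - (tpoly F N.+1).[y] = D y - D 0 by rewrite D0 subr0.
have [c] : exists2 c, c \in `[0, y]%R &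
    D y - D 0 = (F 1 c - (tpoly (fun k => F k.+1) N).[c]) * (y - 0).
  apply: MVT_segment => //.
    move=> z; rewrite in_itv /= => /andP[z0 zy]; apply: dD; rewrite (ltW z0) /=.
    exact: lt_trans zy yb.
  apply: derivable_within_continuous => z; rewrite in_itv /= => /andP[z0 zy].
  have : is_derive z 1 D (F 1 z - (tpoly (fun k => F k.+1) N).[z]).
    by apply: dD; rewrite z0 (le_lt_trans zy yb).
  by case.
rewrite in_itv /= => /andP[c0 cy] ->.
rewrite subr0 mulr_ge0 // subr_ge0 tpoly_horner.
apply: (IH (fun k => F k.+1)).
- by move=> k x hx; apply: (pF k.+1).
- by rewrite c0 (le_lt_trans cy yb).
Qed.
End Taylor.

Section Sec.
Variable R : realType.

Definition secF n : R -> R := (horner (pp R n) \o tan) * (fun y => (cos y)^-1).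

Lemma secFE n x : secF n x = (pp R n).[tan x] / cos x.
Proof. by []. Qed.

Lemma is_derive_secF n x : cos x != 0 -> is_derive x 1 (secF n) (secF n.+1 x).
Proof.
move=> cx.
have h1 : is_derive x 1 (horner (pp R n) \o tan) ((pp R n)^`().[tan x] * (cos x)^-2).
  apply: is_derive1_comp.
have h2 : is_derive x 1 (fun y => (cos y)^-1) (- (cos x) ^- 2 *: (- sin x)).
  by apply: is_deriveV.
have h3 := is_deriveM h1 h2.
apply: is_derive_eq h3 _.
rewrite secFE /= /stp.
rewrite !scale1r !hornerE -cos2_tan2 // /tan /=.
have E : forall a b : R, a *: b = a * b by [].
rewrite !E. set P := (pp R n).[_]. set Q := (pp R n)^`().[_]. set s := sin x. set c := cos x. field; exact: cx.
Qed.

Lemma alpha_bound N (y : R) : 0 <= y < pi / 2 ->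
  \sum_(k < N) `|alpha R k| * y ^+ k / k`!%:R <= (cos y)^-1.
Proof.
move=> /andP[y0 yb].
have cpos : forall x : R, 0 <= x < pi / 2 -> 0 < cos x.
  move=> x /andP[x0 xb]; apply: cos_gt0_pihalf; rewrite xb andbT.
  by apply: lt_le_trans x0; rewrite oppr_lt0 divr_gt0 // pi_gt0.
apply: le_trans (_ : \sum_(k < N) secF k 0 * y ^+ k / k`!%:R <= _).
  apply: ler_sum => k _; rewrite secFE tan0 cos0 divr1.
  rewrite ler_pM2r ?invr_gt0 ?ltr0n ?fact_gt0 //.
  by rewrite ler_wpM2r ?exprn_ge0 // alpha_le.
have -> : (cos y)^-1 = secF 0 y.
  by rewrite secFE /= -polyC1 hornerC div1r.
apply: (taylor_lb (b := pi / 2)).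
- move=> k x hx; apply: is_derive_secF; rewrite gt_eqF //; exact: cpos.
- move=> k x hx; have cx := ltW (cpos x hx); case/andP: hx => x0 xb.
  rewrite secFE divr_ge0 ?pp_horner_ge0 //.
  rewrite /tan divr_ge0 //.
  apply: sin_ge0_pi; rewrite x0 /=; apply: le_trans (ltW xb) _.
  by rewrite ler_pdivrMr // ler_peMr ?pi_ge0 // ler1n.
- by rewrite y0.
Qed.
End Sec.

Local Open Scope classical_set_scope.
Local Open Scope ring_scope.

Section Cauchy.
Variable R : realType.
Implicit Types u v : nat -> R.

Definition cprod u v (n : nat) : R := \sum_(k < n.+1) u k * v (n - k)%N.

Lemma seriesE u N : series u N = \sum_(k < N) u k.
Proof. by rewrite /series /= big_mkord. Qed.

Lemma cprod_series u v N :
  series (cprod u v) N = \sum_(k < N) u k * series v (N - k)%N.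
Proof.
elim: N => [|N IH]; first by rewrite !seriesE !big_ord0.
rewrite !seriesE big_ord_recr /= -seriesE IH big_ord_recr /= subSnn.
rewrite [cprod u v N]/cprod big_ord_recr /= subnn.
have -> : series v 1 = v 0%N by rewrite seriesE big_ord1.
rewrite addrA; congr (_ + _); rewrite -big_split /=.
apply: eq_bigr => k _; rewrite -mulrDr; congr (_ * _).
rewrite subSn ?(ltnW (ltn_ord k)) //.
by rewrite /series /= big_nat_recr.
Qed.

Lemma series_nd u : (forall n, 0 <= u n) -> nondecreasing_seq (series u).
Proof. by move=> h; apply: (@nondecreasing_series _ u xpredT 0) => n _ _. Qed.

Lemma series_le_lim u (U : R) : (forall n, 0 <= u n) -> series u @ \oo --> U ->
  forall n, series u n <= U.
Proof.
move=> h hU n; rewrite -(cvg_lim _ hU) //.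
by apply: nondecreasing_cvgn_le; [exact: series_nd|apply/cvg_ex; exists U].
Qed.

Lemma cprod_nonneg u v (U V : R) : (forall n, 0 <= u n) -> (forall n, 0 <= v n) ->
  series u @ \oo --> U -> series v @ \oo --> V ->
  series (cprod u v) @ \oo --> U * V.
Proof.
move=> hu hv cu cv.
have cp0 : forall n, 0 <= cprod u v n.
  by move=> n; apply: sumr_ge0 => k _; rewrite mulr_ge0.
have ndv := series_nd hv.
have Wle : forall N, series (cprod u v) N <= series u N * series v N.
  move=> N; rewrite cprod_series seriesE mulr_suml; apply: ler_sum => k _.
  by rewrite ler_wpM2l // ndv // leq_subr.
have U0 : 0 <= U by apply: le_trans (series_le_lim hu cu 0); rewrite seriesE big_ord0.
have ub : forall N, series (cprod u v) N <= U * V.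
  move=> N; apply: le_trans (Wle N) _; apply: ler_pM.
  - by rewrite seriesE sumr_ge0.
  - by rewrite seriesE sumr_ge0.
  - exact: series_le_lim.
  - exact: series_le_lim.
have cW : cvgn (series (cprod u v)).
  apply: nondecreasing_is_cvgn; first exact: series_nd.
  by exists (U * V) => _ [n _ <-]; exact: ub.
have Wge : forall N, series u N * series v N <= series (cprod u v) (N + N)%N.
  move=> N; rewrite cprod_series big_split_ord /= seriesE mulr_suml.
  rewrite -[X in X <= _]addr0; apply: lerD; last first.
    by apply: sumr_ge0 => k _; rewrite mulr_ge0 // seriesE sumr_ge0.
  apply: ler_sum => k _; rewrite ler_wpM2l // ndv //.
  by rewrite leq_subRL ?leq_add2r // (leq_trans (ltnW (ltn_ord k))) // leq_addl.
suff -> : U * V = limn (series (cprod u v)) by [].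
apply/eqP; rewrite eq_le; apply/andP; split.
  have cUV : (fun N => series u N * series v N) @ \oo --> U * V by apply: cvgM.
  rewrite -(cvg_lim _ cUV) //; apply: limr_le; first by apply/cvg_ex; exists (U * V).
  near=> N; apply: le_trans (Wge N) _.
  by apply: nondecreasing_cvgn_le => //; exact: series_nd.
apply: limr_le => //; near=> N; exact: ub.
Unshelve. all: by end_near.
Qed.


Lemma cprod_cvg u v (U V : R) : series u @ \oo --> U -> series v @ \oo --> V ->
  cvgn (series (fun n => `|u n|)) -> cvgn (series (fun n => `|v n|)) ->
  series (cprod u v) @ \oo --> U * V.
Proof.
move=> cu cv cau cav.
set A := limn (series (fun n => `|u n|)).
set B := limn (series (fun n => `|v n|)).
pose u2 n := `|u n| - u n; pose v2 n := `|v n| - v n.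
have su2 : series u2 = series (fun n => `|u n|) - series u.
  by apply/funext => N; rewrite !fctE !seriesE -sumrB.
have sv2 : series v2 = series (fun n => `|v n|) - series v.
  by apply/funext => N; rewrite !fctE !seriesE -sumrB.
have cu2 : series u2 @ \oo --> A - U by rewrite su2; apply: cvgB.
have cv2 : series v2 @ \oo --> B - V by rewrite sv2; apply: cvgB.
have u20 : forall n, 0 <= u2 n by move=> n; rewrite subr_ge0 ler_norm.
have v20 : forall n, 0 <= v2 n by move=> n; rewrite subr_ge0 ler_norm.
have a0 : forall n, 0 <= `|u n| by move=> n.
have b0 : forall n, 0 <= `|v n| by move=> n.
have h11 := cprod_nonneg a0 b0 cau cav.
have h12 := cprod_nonneg a0 v20 cau cv2.
have h21 := cprod_nonneg u20 b0 cu2 cav.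
have h22 := cprod_nonneg u20 v20 cu2 cv2.
have E : series (cprod u v) = series (cprod (fun n => `|u n|) (fun n => `|v n|))
   - series (cprod (fun n => `|u n|) v2) - series (cprod u2 (fun n => `|v n|))
   + series (cprod u2 v2).
  apply/funext => N; rewrite !fctE !seriesE -!sumrB -big_split /=.
  apply: eq_bigr => n _; rewrite /cprod -!sumrB -big_split /=.
  apply: eq_bigr => k _; rewrite /u2 /v2; ring.
rewrite E (_ : U * V = A * B - A * (B - V) - (A - U) * B + (A - U) * (B - V)); last by ring.
by apply: cvgD; [apply: cvgB; [apply: cvgB|]|].
Qed.
End Cauchy.

Section Final.
Variable R : realType.

Lemma binom_coef (n k : nat) (y z : R) : (k <= n)%N ->
  y / k`!%:R * (z / (n - k)`!%:R) = y * z / n`!%:R *+ 'C(n, k).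
Proof.
move=> kn; rewrite -(bin_fact kn) -mulr_natr !natrM.
have h1 : (k`!%:R : R) != 0 by rewrite pnatr_eq0 -lt0n fact_gt0.
have h2 : ((n - k)`!%:R : R) != 0 by rewrite pnatr_eq0 -lt0n fact_gt0.
have h3 : ('C(n, k)%:R : R) != 0 by rewrite pnatr_eq0 -lt0n bin_gt0.
field; by rewrite h1 h2 h3.
Qed.

Lemma nonneg_series_cvg (u : nat -> R) (M : R) : (forall n, 0 <= u n) ->
  (forall N, series u N <= M) -> cvgn (series u).
Proof.
move=> h hM; apply: nondecreasing_is_cvgn; first exact: series_nd.
by exists M => _ [n _ <-].
Qed.

Lemma exp_coeff_abs (y : R) k : `|exp_coeff y k| = exp_coeff `|y| k.
Proof.
by rewrite /exp_coeff /= normrM normfV normrX [`|_%:R|]@ger0_norm.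
Qed.

Lemma exp_cvg (y : R) : series (exp_coeff y) @ \oo --> expR y.
Proof. exact: is_cvg_series_exp_coeff. Qed.

Lemma exp_abs_cvg (y : R) : cvgn (series (fun n => `|exp_coeff y n|)).
Proof.
rewrite (_ : (fun n => _) = exp_coeff `|y|); last first.
  by apply/funext => n; rewrite exp_coeff_abs.
exact: is_cvg_series_exp_coeff.
Qed.


Variables (t x : R).
Hypothesis hx : `|x| < pi / 2.

Let u k := alpha R k * x ^+ k / k`!%:R.
Let c k := 2^-1 * (exp_coeff x k + exp_coeff (- x) k).

Lemma u_abs_cvg : cvgn (series (fun n => `|u n|)).
Proof.
apply: (@nonneg_series_cvg _ ((cos `|x|)^-1)) => // N.
rewrite seriesE; apply: le_trans (alpha_bound N _); last first.
  by rewrite normr_ge0 hx.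
rewrite le_eqVlt; apply/orP; left; apply/eqP/eq_bigr => k _.
by rewrite /u !normrM normfV normrX [`|_%:R|]@ger0_norm.
Qed.

Lemma c_cvg : series c @ \oo --> 2^-1 * (expR x + expR (- x)).
Proof.
have -> : series c = (fun N => 2^-1 * (series (exp_coeff x) N + series (exp_coeff (- x)) N)).
  by apply/funext => N; rewrite !seriesE -big_split /= mulr_sumr.
apply: cvgM; first exact: cvg_cst.
by apply: cvgD; exact: exp_cvg.
Qed.

Lemma c_abs_cvg : cvgn (series (fun n => `|c n|)).
Proof.
apply: (@nonneg_series_cvg _ (expR `|x|)) => // N.
have e0 : forall n, 0 <= exp_coeff `|x| n by move=> n; rewrite -exp_coeff_abs.
have H := series_le_lim e0 (exp_cvg (y := `|x|)) N.
apply: le_trans H.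
rewrite !seriesE; apply: ler_sum => k _.
rewrite /c normrM ger0_norm ?invr_ge0 // ler_pdivrMl //.
apply: le_trans (ler_normD _ _) _; rewrite !exp_coeff_abs normrN.
by rewrite -mulr2n mulr_natl.
Qed.

Lemma cprod_uc n : cprod u c n = (n == 0%N)%:R.
Proof.
have E : forall k : 'I_n.+1, u k * c (n - k)%N =
    ((if odd (n - k) then 0 else alpha R k) *+ 'C(n, k)) * (x ^+ n / n`!%:R).
  move=> k; have kn : (k <= n)%N by rewrite -ltnS.
  rewrite /u /c /exp_coeff /= exprNn -signr_odd.
  have -> : x ^+ n = x ^+ k * x ^+ (n - k) by rewrite -exprD subnKC.
  rewrite mulrnAl -mulrnAr -binom_coef //.
  have h1 : (k`!%:R : R) != 0 by rewrite pnatr_eq0 -lt0n fact_gt0.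
  have h2 : ((n - k)`!%:R : R) != 0 by rewrite pnatr_eq0 -lt0n fact_gt0.
  by case: (odd (n - k)); rewrite ?expr1 ?expr0; field; rewrite h1 h2.
rewrite /cprod (eq_bigr _ (fun k _ => E k)) -mulr_suml.
case: n E => [|n] E.
  by rewrite big_ord1 /= expr0 fact0 divr1 mulr1 alpha0.
by rewrite alpha_rec // mul0r.
Qed.


Lemma main_sec : (fun N : nat => \sum_(0 <= n < N)
      sa_poly_eval (Kn_rel n) (finset.setT : {set 'I_n}) t * x ^+ n / n`!%:R)
    @ \oo --> expR (t * x) * sech x.
Proof.
have cau := u_abs_cvg.
have cu : cvgn (series u) by apply: normed_cvg.
set U := limn (series u).
have h1 := cprod_cvg cu c_cvg cau c_abs_cvg.
have h2 : series (cprod u c) @ \oo --> (1 : R).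
  apply: cvg_near_cst; near=> N.
  have [M ->] : exists M, N = M.+1 by exists N.-1; rewrite prednK //; near: N; exact: nbhs_infty_gt.
  rewrite seriesE big_ord_recl cprod_uc /= big1 ?addr0 // => i _.
  by rewrite cprod_uc.
have EU : U * (2^-1 * (expR x + expR (- x))) = 1.
  by rewrite -(cvg_lim _ h1) // (cvg_lim _ h2).
have h3 := cprod_cvg cu (exp_cvg (y := t * x)) cau (exp_abs_cvg (y := t * x)).
have -> : (fun N : nat => \sum_(0 <= n < N)
      sa_poly_eval (Kn_rel n) (finset.setT : {set 'I_n}) t * x ^+ n / n`!%:R) =
    series (cprod u (exp_coeff (t * x))).
  apply/funext => N; rewrite seriesE big_mkord; apply: eq_bigr => n _.
  rewrite sa_poly_Kn /cprod !mulr_suml; apply: eq_bigr => k _.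
  have kn : (k <= n)%N by rewrite -ltnS.
  rewrite /u /exp_coeff /= -mulrA binom_coef // mulrnAl; congr (_ *+ _).
  rewrite exprMn.
  have -> : x ^+ n = x ^+ k * x ^+ (n - k) by rewrite -exprD subnKC.
  ring.
have -> : expR (t * x) * sech x = U * expR (t * x).
  rewrite mulrC; congr (_ * _); rewrite /sech.
  have e0 : expR x + expR (- x) != 0 by rewrite gt_eqF // addr_gt0 ?expR_gt0.
  apply: (mulIf (_ : 2^-1 * (expR x + expR (- x)) != 0)).
    by rewrite mulf_neq0 // invr_eq0 pnatr_eq0.
  rewrite EU; field; by rewrite e0.
exact: h3.
Unshelve. all: by end_near.
Qed.

End Final.

Unset Implicit Arguments.
Theorem mainTheorem3 (R : realType) (t x : R) (hx : `|x| < pi / 2) :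
  (fun N : nat => \sum_(0 <= n < N)
      sa_poly_eval (Kn_rel n) (finset.setT : {set 'I_n}) t * x ^+ n / n`!%:R)
    @ \oo --> expR (t * x) * sech x.
Proof. exact: main_sec. Qed.
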